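(* Let $\mathbf{Q}=(q_{ij})_{i,j=1}^l$ be a complex matrix with $q_{ij}q_{ji}=1$. Let $V$ be any nonlocal vertex algebra and let $\psi$ be any map from $\{u^{(i)},v^{(i)}\mid i=1,\dots,l\}$ to $V$ such that for $1\le i,j\le l$ $$Y(\psi(u^{(i)}),x_1)Y(\psi(u^{(j)}),x_2)=q_{ij}Y(\psi(u^{(j)}),x_2)Y(\psi(u^{(i)}),x_1),$$ $$Y(\psi(v^{(i)}),x_1)Y(\psi(v^{(j)}),x_2)=q_{ij}Y(\psi(v^{(j)}),x_2)Y(\psi(v^{(i)}),x_1),$$ $$Y(\psi(u^{(i)}),x_1)Y(\psi(v^{(j)}),x_2)-q_{ji}Y(\psi(v^{(j)}),x_2)Y(\psi(u^{(i)}),x_1)=\delta_{ij}x_2^{-1}\delta\left(\frac{x_1}{x_2}\right).$$ Then there exists a unique nonlocal vertex algebra homomorphism from $V_{\mathbf{Q}}$ to $V$ extending $\psi$.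
   Context: $x_2^{-1}\delta(x_1/x_2)=\sum_{n\in\mathbb{Z}}x_1^nx_2^{-n-1}$. A nonlocal vertex algebra is a complex vector space $V$ with vector $\mathbf{1}$ and linear $Y:V\to\mathrm{Hom}(V,V((x)))$, $Y(v,x)=\sum_nv_nx^{-n-1}$, with $Y(\mathbf{1},x)v=v$, $Y(v,x)\mathbf{1}\in V[[x]]$ with constant term $v$, and for $u,v,w$ some $l\ge0$ with $(x_0+x_2)^lY(u,x_0+x_2)Y(v,x_2)w=(x_0+x_2)^lY(Y(u,x_0)v,x_2)w$; a homomorphism is a linear map preserving $\mathbf{1}$ and $Y$. $\mathcal{A}_{\mathbf{Q}}$ is the unital algebra with generators $X_{i,n},Y_{i,n}$ and relations $X_{i,m}X_{j,n}=q_{ij}X_{j,n}X_{i,m}$, $Y_{i,m}Y_{j,n}=q_{ij}Y_{j,n}Y_{i,m}$, $X_{i,m}Y_{j,n}-q_{ji}Y_{j,n}X_{i,m}=\delta_{ij}\delta_{m+n+1,0}$; $V_{\mathbf{Q}}=\mathcal{A}_{\mathbf{Q}}/(\mathcal{A}_{\mathbf{Q}}\mathcal{A}^+_{\mathbf{Q}})$ with $\mathcal{A}^+_{\mathbf{Q}}$ generated by $X_{i,m},Y_{i,m}$, $m\ge0$, $\mathbf{1}=1+\mathcal{A}_{\mathbf{Q}}\mathcal{A}^+_{\mathbf{Q}}$, $u^{(i)}=X_{i,-1}\mathbf{1}$, $v^{(i)}=Y_{i,-1}\mathbf{1}$; $V_{\mathbf{Q}}$ has the unique nonlocal vertex algebra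 structure with vacuum $\mathbf{1}$, $Y(u^{(i)},x)=\sum_nX_{i,n}x^{-n-1}$, $Y(v^{(i)},x)=\sum_nY_{i,n}x^{-n-1}$. *)

(* Defs.v *)
From HB Require Import structures.
From mathcomp Require Import all_boot all_order all_algebra.
From mathcomp Require Import reals Rstruct complex.
From mathcomp.multinomials Require Import monalg.
From Stdlib Require Import ClassicalEpsilon.
Set Implicit Arguments. Unset Strict Implicit. Unset Printing Implicit Defensive.
Import GRing.Theory.
Local Open Scope ring_scope.
Local Open Scope quotient_scope.

Notation C := (complex Rdefinitions.R).

Definition pbool (P : Prop) : bool :=
  if excluded_middle_informative P then true else false.
Lemma pboolP (P : Prop) : reflect P (pbool P).
Proof. by rewrite /pbool; case: excluded_middle_informative => h; constructor. Qed.

Section LQuot.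

Variables (K : pzRingType) (T : lmodType K) (G : T -> Prop).

Definition span (x : T) : Prop :=
  forall P : T -> Prop, P 0 -> (forall a y z, P y -> P z -> P (a *: y + z)) ->
  (forall g, G g -> P g) -> P x.

Lemma span0 : span 0. Proof. by move=> P. Qed.
Lemma spanZD a y z : span y -> span z -> span (a *: y + z).
Proof. by move=> hy hz P h0 hc hg; apply: (hc); [exact: (hy P h0 hc hg)|exact: (hz P h0 hc hg)]. Qed.
Lemma spanD y z : span y -> span z -> span (y + z).
Proof. by move=> hy hz; rewrite -[y]scale1r; apply: spanZD. Qed.
Lemma spanZ a y : span y -> span (a *: y).
Proof. by move=> hy; rewrite -[_ *: _]addr0; apply: spanZD => //; apply: span0. Qed.
Lemma spanN y : span y -> span (- y).
Proof. by move=> hy; rewrite -scaleN1r; apply: spanZ. Qed.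

Definition span_eqv (x y : T) : bool := pbool (span (x - y)).
Lemma span_eqv_refl : reflexive span_eqv.
Proof. by move=> x; apply/pboolP; rewrite subrr; apply: span0. Qed.
Lemma span_eqv_sym : symmetric span_eqv.
Proof.
suff h : forall x y, span_eqv x y -> span_eqv y x.
  by move=> x y; apply/idP/idP; apply: h.
by move=> x y /pboolP hxy; apply/pboolP; rewrite -opprB; apply: spanN.
Qed.
Lemma span_eqv_trans : transitive span_eqv.
Proof.
move=> y x z /pboolP h1 /pboolP h2; apply/pboolP.
by have := spanD h1 h2; rewrite addrA subrK.
Qed.
Definition span_equiv := EquivRel span_eqv span_eqv_refl span_eqv_sym span_eqv_trans.

Definition lquot := {eq_quot span_equiv}.
HB.instance Definition _ := Choice.on lquot.
HB.instance Definition _ := Quotient.on lquot.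
HB.instance Definition _ := EqQuotient.on lquot.

Definition lq_pi (x : T) : lquot := \pi_lquot x.
Lemma lq_eqP x y : reflect (lq_pi x = lq_pi y) (span_eqv x y).
Proof. exact: eqmodP. Qed.
Lemma lq_piK (x : T) : span (repr (lq_pi x) - x).
Proof. by apply/pboolP/lq_eqP; rewrite /lq_pi reprK. Qed.

Definition lq_zero : lquot := lq_pi 0.
Definition lq_add (a b : lquot) : lquot := lq_pi (repr a + repr b).
Definition lq_opp (a : lquot) : lquot := lq_pi (- repr a).
Definition lq_scale (c : K) (a : lquot) : lquot := lq_pi (c *: repr a).

Lemma lq_addE x y : lq_add (lq_pi x) (lq_pi y) = lq_pi (x + y).
Proof.
apply/lq_eqP/pboolP; have := spanD (lq_piK x) (lq_piK y).
by congr span; rewrite opprD !addrA; congr (_ + _); rewrite addrAC.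
Qed.
Lemma lq_oppE x : lq_opp (lq_pi x) = lq_pi (- x).
Proof. by apply/lq_eqP/pboolP; have := spanN (lq_piK x); rewrite opprB opprK addrC. Qed.
Lemma lq_scaleE c x : lq_scale c (lq_pi x) = lq_pi (c *: x).
Proof. by apply/lq_eqP/pboolP; have := spanZ c (lq_piK x); rewrite scalerBr. Qed.

Lemma lq_ind (P : lquot -> Prop) : (forall x, P (lq_pi x)) -> forall a, P a.
Proof. by move=> h a; rewrite -[a]reprK; apply: h. Qed.

Lemma lq_addA : associative lq_add.
Proof. by elim/lq_ind=> x; elim/lq_ind=> y; elim/lq_ind=> z; rewrite !lq_addE addrA. Qed.
Lemma lq_addC : commutative lq_add.
Proof. by elim/lq_ind=> x; elim/lq_ind=> y; rewrite !lq_addE addrC. Qed.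
Lemma lq_add0 : left_id lq_zero lq_add.
Proof. by elim/lq_ind=> x; rewrite lq_addE add0r. Qed.
Lemma lq_addN : left_inverse lq_zero lq_opp lq_add.
Proof. by elim/lq_ind=> x; rewrite lq_oppE lq_addE addNr. Qed.

HB.instance Definition _ := GRing.isZmodule.Build lquot lq_addA lq_addC lq_add0 lq_addN.
Lemma lq_piD x y : lq_pi x + lq_pi y = lq_pi (x + y). Proof. exact: lq_addE. Qed.

Lemma lq_scaleA a b v : lq_scale a (lq_scale b v) = lq_scale (a * b) v.
Proof. by elim/lq_ind: v => x; rewrite !lq_scaleE scalerA. Qed.
Lemma lq_scale1 : left_id 1 lq_scale.
Proof. by elim/lq_ind=> x; rewrite lq_scaleE scale1r. Qed.
Lemma lq_scaleDr : right_distributive lq_scale +%R.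
Proof.
by move=> a; elim/lq_ind=> x; elim/lq_ind=> y;
  rewrite lq_piD !lq_scaleE lq_piD scalerDr.
Qed.
Lemma lq_scaleDl v : {morph lq_scale^~ v : a b / a + b}.
Proof.
by elim/lq_ind: v => x a b; rewrite !lq_scaleE lq_piD scalerDl.
Qed.

HB.instance Definition _ := GRing.Zmodule_isLmodule.Build K lquot
  lq_scaleA lq_scale1 lq_scaleDr lq_scaleDl.

End LQuot.

(* Y(u,x)w = sum_n u_n w x^{-n-1} is encoded by  vop u w n = u_n w.    *)

Definition binK (K : fieldType) (z : int) (k : nat) : K :=
  (\prod_(i < k) ((z - (i : nat)%:Z)%:~R : K)) / (k`!)%:R.

Section NLVA.
Variables (K : fieldType) (V : lmodType K).

(* coefficient of x0^a x2^b in (x0+x2)^l Y(u,x0+x2)Y(v,x2)w, where the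
   (a priori infinite) sum over k is cut at K0; it is the exact
   coefficient as soon as v_n w = 0 for all n >= K0 - b - 1. *)
Definition assocL (vop : V -> V -> int -> V) (u v w : V) (l : nat)
    (a b : int) (K0 : nat) : V :=
  \sum_(j < l.+1) ('C(l, j))%:R *:
    \sum_(k < K0) binK K (a - (j : nat)%:Z + (k : nat)%:Z) k *:
       vop u (vop v w ((k : nat)%:Z - (b - (l : nat)%:Z + (j : nat)%:Z) - 1))
             (- (a - (j : nat)%:Z) - 1 - (k : nat)%:Z).

(* coefficient of x0^a x2^b in (x0+x2)^l Y(Y(u,x0)v,x2)w *)
Definition assocR (vop : V -> V -> int -> V) (u v w : V) (l : nat)
    (a b : int) : V :=
  \sum_(j < l.+1) ('C(l, j))%:R *:
    vop (vop u v (- (a - (j : nat)%:Z) - 1)) w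
        (- (b - (l : nat)%:Z + (j : nat)%:Z) - 1).

Record nlva := NLVA {
  vac : V;
  vop : V -> V -> int -> V;
  vop_linl : forall w n c u1 u2,
    vop (c *: u1 + u2) w n = c *: vop u1 w n + vop u2 w n;
  vop_linr : forall u n c w1 w2,
    vop u (c *: w1 + w2) n = c *: vop u w1 n + vop u w2 n;
  vop_trunc : forall u w, exists N : int, forall n : int, N <= n -> vop u w n = 0;
  vop_vac : forall w n, vop vac w n = if n == -1 then w else 0;
  vop_create_pos : forall u (n : int), 0 <= n -> vop u vac n = 0;
  vop_create_const : forall u, vop u vac (-1) = u;
  vop_wassoc : forall u v w, exists l : nat, forall (a b : int) (K0 : nat),
    (forall n : int, (K0 : nat)%:Z - b - 1 <= n -> vop v w n = 0) ->
    assocL vop u v w l a b K0 = assocR vop u v w l a b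
}.
End NLVA.

Definition nlva_hom (K : fieldType) (A B : lmodType K)
    (SA : nlva A) (SB : nlva B) (f : A -> B) : Prop :=
  [/\ forall c x y, f (c *: x + y) = c *: f x + f y,
      f (vac SA) = vac SB &
      forall u w n, f (vop SA u w n) = vop SB (f u) (f w) n].

(* Generators: ((true, i), n) is X_{i,n}, ((false, i), n) is Y_{i,n}.    *)
Definition Gen (l : nat) := ((bool * 'I_l) * int)%type.

Definition FreeA (l : nat) := {malg C[{fmonom (Gen l)}]}.

Definition gX (l : nat) (i : 'I_l) (n : int) : FreeA l := << fmu ((true, i), n) >>.
Definition gY (l : nat) (i : 'I_l) (n : int) : FreeA l := << fmu ((false, i), n) >>.

(* defining relations of A_Q (as elements r with r = 0 in A_Q) *)
Definition relQ (l : nat) (q : 'M[C]_l) (r : FreeA l) : Prop :=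
  exists (i j : 'I_l) (m n : int),
    [\/ r = gX i m * gX j n - q i j *: (gX j n * gX i m),
         r = gY i m * gY j n - q i j *: (gY j n * gY i m) |
         r = gX i m * gY j n - q j i *: (gY j n * gX i m)
             - (if (i == j) && (m + n + 1 == 0) then 1 else 0)].

(* spanning set of the preimage in the free algebra of the left ideal
   A_Q A_Q^+ : the two-sided ideal of relations plus FreeA * A^+ *)
Definition genL (l : nat) (q : 'M[C]_l) (f : FreeA l) : Prop :=
  (exists a r b, relQ q r /\ f = a * r * b) \/
  (exists a (i : 'I_l) (m : int), 0 <= m /\ (f = a * gX i m \/ f = a * gY i m)).

Definition VQ (l : nat) (q : 'M[C]_l) : lmodType C := lquot (@genL l q).

Definition VQpi (l : nat) (q : 'M[C]_l) (f : FreeA l) : VQ q := lq_pi (@genL l q) f.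

Definition vacQ (l : nat) (q : 'M[C]_l) : VQ q := VQpi q 1.
Definition uQ (l : nat) (q : 'M[C]_l) (i : 'I_l) : VQ q := VQpi q (gX i (-1)).
Definition vQ (l : nat) (q : 'M[C]_l) (i : 'I_l) : VQ q := VQpi q (gY i (-1)).

Definition VQ_structure (l : nat) (q : 'M[C]_l) (S : nlva (VQ q)) : Prop :=
  [/\ vac S = vacQ q,
      forall i n f, vop S (uQ q i) (VQpi q f) n = VQpi q (gX i n * f) &
      forall i n f, vop S (vQ q i) (VQpi q f) n = VQpi q (gY i n * f)].

(* Main.v *)
Require Import Defs.
From HB Require Import structures.
From mathcomp Require Import all_boot all_order all_algebra zify.
From mathcomp Require Import reals Rstruct complex.
From mathcomp Require Import finmap.
From Stdlib Require Import FunctionalExtensionality.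
From mathcomp.multinomials Require Import monalg.
Import Order.TTheory GRing.Theory Num.Theory.
Set Implicit Arguments. Unset Strict Implicit.
Local Open Scope fset_scope.
Local Open Scope ring_scope.

Section Abstract.
Variables (K : fieldType) (V : lmodType K).

Lemma pascal (T : int -> int -> V) (l : nat) (a b : int) :
  \sum_(0 <= j < l.+2) ('C(l.+1, j))%:R *: T (a - (j:nat)%:Z) (b - (l.+1:nat)%:Z + (j:nat)%:Z) =
  \sum_(0 <= j < l.+1) ('C(l, j))%:R *: T (a - (j:nat)%:Z) ((b - 1) - (l:nat)%:Z + (j:nat)%:Z) +
  \sum_(0 <= j < l.+1) ('C(l, j))%:R *: T ((a - 1) - (j:nat)%:Z) (b - (l:nat)%:Z + (j:nat)%:Z).
Proof.
rewrite big_nat_recl // bin0.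
under eq_bigr do rewrite binS natrD scalerDl.
rewrite big_split /= addrA; congr (_ + _); last first.
  by apply: eq_bigr => j _; congr (_ *: T _ _); lia.
rewrite [in LHS]big_nat_recr //= bin_small //.
rewrite [X in _ + (_ + X)](_ : _ = 0) ?addr0; last by rewrite scale0r.
rewrite [in RHS]big_nat_recl // bin0; congr (_ + _); first by congr (_ *: T _ _); lia.
by apply: eq_bigr => j _; congr (_ *: T _ _); lia.
Qed.

Definition TL (vop : V -> V -> int -> V) (u v w : V) (K0 : nat) (a' b' : int) :=
  \sum_(k < K0) binK K (a' + (k : nat)%:Z) k *:
       vop u (vop v w ((k : nat)%:Z - b' - 1)) (- a' - 1 - (k : nat)%:Z).
Definition TR (vop : V -> V -> int -> V) (u v w : V) (a' b' : int) :=
  vop (vop u v (- a' - 1)) w (- b' - 1).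

Lemma assocL_nat (vop : V -> V -> int -> V) (u v w : V) (l : nat) (a b : int) (K0 : nat) :
  assocL vop u v w l a b K0 = \sum_(0 <= j < l.+1) ('C(l, j))%:R *:
    TL vop u v w K0
    (a - (j:nat)%:Z) (b - (l:nat)%:Z + (j:nat)%:Z).
Proof. by rewrite /assocL big_mkord. Qed.

Lemma assocR_nat (vop : V -> V -> int -> V) (u v w : V) (l : nat) (a b : int) :
  assocR vop u v w l a b = \sum_(0 <= j < l.+1) ('C(l, j))%:R *:
    TR vop u v w
    (a - (j:nat)%:Z) (b - (l:nat)%:Z + (j:nat)%:Z).
Proof. by rewrite /assocR big_mkord. Qed.

Lemma wassoc_up (vop : V -> V -> int -> V) u v w l :
  (forall (a b : int) (K0 : nat),
    (forall n : int, (K0 : nat)%:Z - b - 1 <= n -> vop v w n = 0) ->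
    assocL vop u v w l a b K0 = assocR vop u v w l a b) ->
  forall d, (forall (a b : int) (K0 : nat),
    (forall n : int, (K0 : nat)%:Z - b - 1 <= n -> vop v w n = 0) ->
    assocL vop u v w (l + d) a b K0 = assocR vop u v w (l + d) a b).
Proof.
move=> h d; elim: d => [|d IH]; first by rewrite addn0.
move=> a b K0 hK; rewrite addnS assocL_nat assocR_nat !pascal.
rewrite -!assocL_nat -!assocR_nat.
rewrite IH; last by move=> n hn; apply: hK; lia.
by rewrite IH.
Qed.

End Abstract.

Lemma vop0l (K : fieldType) (V : lmodType K) (S : nlva V) w n : vop S 0 w n = 0.
Proof.
have := vop_linl S w n 1 0 0; rewrite !scale1r addr0 => /(congr1 (fun z => z - vop S 0 w n)).
by rewrite subrr addrK => <-.
Qed.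

Lemma vop0r (K : fieldType) (V : lmodType K) (S : nlva V) u n : vop S u 0 n = 0.
Proof.
have := vop_linr S u n 1 0 0; rewrite !scale1r addr0 => /(congr1 (fun z => z - vop S u 0 n)).
by rewrite subrr addrK => <-.
Qed.

Lemma assocR_split (K : fieldType) (V : lmodType K) (vop : V -> V -> int -> V) (u v w : V)
   (L : nat) (p r : int) :
  assocR vop u v w L (- p - 1) ((L : nat)%:Z - 1 - r) = vop (vop u v p) w r +
  \sum_(0 <= j < L) ('C(L, j.+1))%:R *: vop (vop u v (p + (j.+1 : nat)%:Z)) w (r - (j.+1 : nat)%:Z).
Proof.
rewrite assocR_nat big_nat_recl // bin0 scale1r /TR; congr (vop (vop _ _ _) _ _ + _); try lia.
by apply: eq_bigr => j _; congr (_ *: vop (vop _ _ _) _ _); lia.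
Qed.

Section Hom.
Variables (K : fieldType) (A B : lmodType K) (SA : nlva A) (SB : nlva B) (f : A -> B).
Hypothesis flin : forall c x y, f (c *: x + y) = c *: f x + f y.

Lemma f0 : f 0 = 0.
Proof.
have := flin 1 0 0; rewrite !scale1r addr0 => /(congr1 (fun z => z - f 0)).
by rewrite subrr addrK => <-.
Qed.
Lemma fD x y : f (x + y) = f x + f y.
Proof. by have := flin 1 x y; rewrite !scale1r. Qed.
Lemma fZ c x : f (c *: x) = c *: f x.
Proof. by rewrite -[_ *: _]addr0 flin f0 addr0. Qed.
Lemma fN x : f (- x) = - f x.
Proof. by rewrite -scaleN1r fZ scaleN1r. Qed.
Lemma fB x y : f (x - y) = f x - f y.
Proof. by rewrite fD fN. Qed.
Lemma fsum (I : Type) (r : seq I) (P : pred I) (F : I -> A) :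
  f (\sum_(i <- r | P i) F i) = \sum_(i <- r | P i) f (F i).
Proof. exact: (big_morph f fD f0). Qed.

Lemma fassocL (u v w : A)
  (hu : forall x k, f (vop SA u x k) = vop SB (f u) (f x) k)
  (hv : forall x k, f (vop SA v x k) = vop SB (f v) (f x) k) L a b K0 :
  f (assocL (vop SA) u v w L a b K0) = assocL (vop SB) (f u) (f v) (f w) L a b K0.
Proof.
rewrite /assocL fsum; apply: eq_bigr => j _; rewrite fZ fsum; congr (_ *: _).
by apply: eq_bigr => k _; rewrite fZ hu hv.
Qed.

Lemma closure (u v : A)
  (hu : forall x k, f (vop SA u x k) = vop SB (f u) (f x) k)
  (hv : forall x k, f (vop SA v x k) = vop SB (f v) (f x) k) p w r :
  f (vop SA (vop SA u v p) w r) = vop SB (vop SB (f u) (f v) p) (f w) r.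
Proof.
have [lA hA] := vop_wassoc SA u v w.
have [lB hB] := vop_wassoc SB (f u) (f v) (f w).
have hA' := wassoc_up hA lB; have hB' := wassoc_up hB lA; rewrite addnC in hB'.
set L := (lA + lB)%N in hA' hB'.
have [NA hNA] := vop_trunc SA u v; have [NB hNB] := vop_trunc SB (f u) (f v).
have [MA hMA] := vop_trunc SA v w; have [MB hMB] := vop_trunc SB (f v) (f w).
pose N := Num.max NA NB.
suff H : forall d : nat, forall p r, N - (d : nat)%:Z <= p ->
    f (vop SA (vop SA u v p) w r) = vop SB (vop SB (f u) (f v) p) (f w) r.
  by apply: (H (absz (N - p))); lia.
elim=> [|d IH] {}p {}r hp.
  rewrite hNA; last lia. rewrite hNB; last lia.
  by rewrite !vop0l f0.
pose a := - p - 1; pose b := (L : nat)%:Z - 1 - r.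
pose K0 := absz (Num.max MA MB + b + 1).
have eA := hA' a b K0 (fun n hn => hMA n ltac:(lia)).
have eB := hB' a b K0 (fun n hn => hMB n ltac:(lia)).
rewrite assocR_split in eA; rewrite assocR_split in eB.
have -> : vop SA (vop SA u v p) w r = assocL (vop SA) u v w L a b K0 -
   \sum_(0 <= j < L) ('C(L, j.+1))%:R *: vop SA (vop SA u v (p + (j.+1 : nat)%:Z)) w (r - (j.+1 : nat)%:Z).
  by rewrite eA addrK.
have -> : vop SB (vop SB (f u) (f v) p) (f w) r = assocL (vop SB) (f u) (f v) (f w) L a b K0 -
   \sum_(0 <= j < L) ('C(L, j.+1))%:R *: vop SB (vop SB (f u) (f v) (p + (j.+1 : nat)%:Z)) (f w) (r - (j.+1 : nat)%:Z).
  by rewrite eB addrK.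
rewrite fB fassocL // fsum; congr (_ - _); apply: eq_bigr => j _.
by rewrite fZ IH //; lia.
Qed.

End Hom.

Section Concrete.
Variables (l : nat) (q : 'M[C]_l) (V : lmodType C) (S : nlva V) (psu psv : 'I_l -> V).
Variables (SQ : nlva (VQ q)) (hSQ : VQ_structure SQ).

Definition actg (g : Gen l) (x : V) : V :=
  match g with ((b, i), n) => if b then vop S (psu i) x n else vop S (psv i) x n end.
Definition actm (m : {fmonom Gen l}) (x : V) : V := foldr actg x (fmonom_val m).
Definition Fop (p : FreeA l) (x : V) : V := \sum_(k <- msupp p) p@_k *: actm k x.

Lemma actm_lin m c x y : actm m (c *: x + y) = c *: actm m x + actm m y.
Proof.
case: m => s; rewrite /actm /=; elim: s => [|[[b i] n] s IH] //=.
by rewrite IH; case: b; rewrite vop_linr.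
Qed.

Lemma FopEw (d : {fset _}) p x : msupp p `<=` d -> Fop p x = \sum_(k <- d) p@_k *: actm k x.
Proof.
move=> le; rewrite /Fop [LHS](big_fset_incl _ le) => //= k _ /mcoeff_outdom ->.
by rewrite scale0r.
Qed.

Lemma FopD p r x : Fop (p + r) x = Fop p x + Fop r x.
Proof.
rewrite (@FopEw (msupp p `|` msupp r)); last exact: msuppD_le.
rewrite (@FopEw (msupp p `|` msupp r) p); last exact: fsubsetUl.
rewrite (@FopEw (msupp p `|` msupp r) r); last exact: fsubsetUr.
by rewrite -big_split; apply: eq_bigr => k _; rewrite mcoeffD scalerDl.
Qed.

Lemma Fop0 x : Fop 0 x = 0.
Proof. by rewrite /Fop msupp0 big_seq_fset0. Qed.

Lemma FopZ c p x : Fop (c *: p) x = c *: Fop p x.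
Proof.
rewrite (@FopEw (msupp p)); last by rewrite msuppZ; case: eqP => _ //; apply: fsub0set.
rewrite /Fop scaler_sumr; apply: eq_bigr => k _; by rewrite mcoeffZ scalerA.
Qed.

Lemma FopN p x : Fop (- p) x = - Fop p x.
Proof. by rewrite -(scaleN1r p) FopZ scaleN1r. Qed.
Lemma FopB p r x : Fop (p - r) x = Fop p x - Fop r x.
Proof. by rewrite FopD FopN. Qed.

Lemma FopU c k x : Fop << c *g k >> x = c *: actm k x.
Proof. by rewrite (@FopEw [fset k]) ?msuppU_le // big_seq_fset1 mcoeffUU. Qed.

Lemma Fop_lin p c x y : Fop p (c *: x + y) = c *: Fop p x + Fop p y.
Proof.
rewrite /Fop scaler_sumr -big_split; apply: eq_bigr => k _.
by rewrite actm_lin scalerDr !scalerA mulrC.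
Qed.

Lemma Fop_sum (I : Type) (r : seq I) (P : pred I) (F : I -> FreeA l) x :
  Fop (\sum_(i <- r | P i) F i) x = \sum_(i <- r | P i) Fop (F i) x.
Proof. exact: (big_morph (fun p => Fop p x) (fun p r => FopD p r x) (Fop0 x)). Qed.

Lemma actmM (k1 k2 : {fmonom Gen l}) x : actm (mmul k1 k2) x = actm k1 (actm k2 x).
Proof. by rewrite /actm fmM foldr_cat. Qed.

Lemma FopM p r x : Fop (p * r) x = Fop p (Fop r x).
Proof.
rewrite malgME Fop_sum [in RHS]/Fop; apply: eq_bigr => k1 _.
rewrite Fop_sum (fsum (actm_lin k1)) scaler_sumr; apply: eq_bigr => k2 _.
by rewrite FopU actmM (fZ (actm_lin k1)) scalerA.
Qed.

Lemma Fop1 x : Fop 1 x = x.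
Proof.
have -> : (1 : FreeA l) = << (mone : {fmonom Gen l}) >> by [].
by rewrite FopU scale1r /actm fm1.
Qed.

Lemma FopX i n x : Fop (gX i n) x = vop S (psu i) x n.
Proof. by rewrite /gX FopU scale1r /actm fmU. Qed.
Lemma FopY i n x : Fop (gY i n) x = vop S (psv i) x n.
Proof. by rewrite /gY FopU scale1r /actm fmU. Qed.


Hypothesis hXX : forall (i j : 'I_l) (m n : int) (w : V),
     vop S (psu i) (vop S (psu j) w n) m = q i j *: vop S (psu j) (vop S (psu i) w m) n.
Hypothesis hYY : forall (i j : 'I_l) (m n : int) (w : V),
     vop S (psv i) (vop S (psv j) w n) m = q i j *: vop S (psv j) (vop S (psv i) w m) n.
Hypothesis hXY : forall (i j : 'I_l) (m n : int) (w : V),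
     vop S (psu i) (vop S (psv j) w n) m - q j i *: vop S (psv j) (vop S (psu i) w m) n
     = (if (i == j) && (m + n + 1 == 0) then w else 0).

Lemma Fop_comm (a b : FreeA l) (c : C) (A B : V -> V)
  (ha : forall y, Fop a y = A y) (hb : forall y, Fop b y = B y) x :
  Fop (a * b - c *: (b * a)) x = A (B x) - c *: B (A x).
Proof.
rewrite (FopB (a * b) (c *: (b * a)) x).
rewrite (FopZ c (b * a) x).
by congr (_ - _ *: _); rewrite FopM ?ha ?hb.
Qed.

Lemma Fop_rel r x : relQ q r -> Fop r x = 0.
Proof.
case=> i [j [m [n [] ->]]].
- by rewrite (Fop_comm _ (FopX i m) (FopX j n)) hXX subrr.
- by rewrite (Fop_comm _ (FopY i m) (FopY j n)) hYY subrr.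
- rewrite FopB (Fop_comm _ (FopX i m) (FopY j n)) hXY.
  by case: ifP => _; [rewrite Fop1 | rewrite Fop0]; rewrite subrr.
Qed.

Definition Fv (p : FreeA l) : V := Fop p (vac S).

Lemma Fop_r0 p : Fop p 0 = 0.
Proof. exact: (f0 (Fop_lin p)). Qed.

Lemma F_genL g : genL q g -> Fv g = 0.
Proof.
case=> [[a [r [b [hr ->]]]]|[a [i [m [hm [->|->]]]]]]; rewrite /Fv.
- by rewrite !FopM (Fop_rel _ hr) Fop_r0.
- by rewrite FopM FopX (vop_create_pos _ _ hm) Fop_r0.
- by rewrite FopM FopY (vop_create_pos _ _ hm) Fop_r0.
Qed.

Lemma F_span x : Defs.span (@genL l q) x -> Fv x = 0.
Proof.
move=> h; apply: (h (fun y => Fv y = 0)).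
- by rewrite /Fv Fop0.
- by move=> a y z hy hz; rewrite /Fv FopD FopZ -/(Fv y) -/(Fv z) hy hz scaler0 addr0.
- exact: F_genL.
Qed.

Definition fQ (x : VQ q) : V := Fv (repr x).

Lemma fQ_pi p : fQ (VQpi q p) = Fv p.
Proof.
have := F_span (@lq_piK _ _ (@genL l q) p).
rewrite /Fv FopB => /eqP; rewrite subr_eq0 => /eqP.
by rewrite /fQ /Fv.
Qed.

Lemma VQpi_lin c p r : VQpi q (c *: p + r) = c *: VQpi q p + VQpi q r.
Proof. by rewrite /VQpi -lq_piD -lq_scaleE. Qed.

Lemma VQ_ind (P : VQ q -> Prop) : (forall p, P (VQpi q p)) -> forall x, P x.
Proof. exact: lq_ind. Qed.


Lemma fQ_lin c x y : fQ (c *: x + y) = c *: fQ x + fQ y.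
Proof.
elim/VQ_ind: x => p; elim/VQ_ind: y => r.
rewrite -VQpi_lin !fQ_pi /Fv.
by rewrite FopD FopZ.
Qed.

Lemma malg_ind (P : FreeA l -> Prop) :
  P 0 -> (forall c k p, P p -> P (c *: << k >> + p)) -> forall p, P p.
Proof.
move=> h0 hs p; rewrite (monalgE p); apply: big_rec => // k r _ hr.
have -> : << p@_k *g k >> = p@_k *: << k >> :> FreeA l.
  apply/malgP => k'; rewrite mcoeffZ !mcoeffU.
  by case: (k == k'); rewrite ?mulr1n ?mulr0n ?mulr1 ?mulr0.
exact: hs.
Qed.

Lemma mono_nil : << FMonom ([::] : seq (Gen l)) >> = 1 :> FreeA l.
Proof.
have -> : FMonom ([::] : seq (Gen l)) = mone by apply: val_inj; rewrite /= fm1.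
by [].
Qed.

Lemma mono_cons g s : << FMonom (g :: s) >> = << fmu g >> * << FMonom s >> :> FreeA l.
Proof.
rewrite malgM_def fgmulUU mulr1.
have -> : FMonom (g :: s) = mmul (fmu g) (FMonom s) by apply: val_inj; rewrite /= fmM fmU.
by [].
Qed.

Definition U (u : VQ q) := forall w n, fQ (vop SQ u w n) = vop S (fQ u) (fQ w) n.

Lemma fQ0 : fQ 0 = 0.
Proof. exact: (f0 fQ_lin). Qed.

Lemma U_lin c u1 u2 : U u1 -> U u2 -> U (c *: u1 + u2).
Proof.
move=> h1 h2 w n; rewrite vop_linl (fQ_lin c (vop SQ u1 w n)) (h1 w n) (h2 w n).
by rewrite fQ_lin vop_linl.
Qed.

Lemma U0 : U 0.
Proof. by move=> w n; rewrite !vop0l fQ0 vop0l. Qed.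

Lemma fQ_vac : fQ (vac SQ) = vac S.
Proof. by case: hSQ => -> _ _; rewrite /vacQ fQ_pi /Fv Fop1. Qed.

Lemma U_vac : U (vac SQ).
Proof.
move=> w n; rewrite vop_vac fQ_vac vop_vac.
by case: ifP => _ //; rewrite fQ0.
Qed.

Lemma U_vop u v n : U u -> U v -> U (vop SQ u v n).
Proof.
move=> hu hv w m.
by rewrite (closure fQ_lin hu hv n w m) (hu v n).
Qed.

Lemma U_gen (g : VQ q) (ga : int -> FreeA l) (z : V)
  (hg : forall n p, vop SQ g (VQpi q p) n = VQpi q (ga n * p))
  (hA : forall n y, Fop (ga n) y = vop S z y n) (hfg : fQ g = z) : U g.
Proof.
move=> w n; elim/VQ_ind: w => p.
rewrite hg hfg !fQ_pi /Fv FopM.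
by rewrite hA.
Qed.

Lemma fQ_u i : fQ (uQ q i) = psu i.
Proof. by rewrite /uQ fQ_pi /Fv FopX vop_create_const. Qed.
Lemma fQ_v i : fQ (vQ q i) = psv i.
Proof. by rewrite /vQ fQ_pi /Fv FopY vop_create_const. Qed.

Lemma U_u i : U (uQ q i).
Proof.
case: hSQ => _ hu _.
exact: (U_gen (hu i) (FopX i) (fQ_u i)).
Qed.
Lemma U_v i : U (vQ q i).
Proof.
case: hSQ => _ _ hv.
exact: (U_gen (hv i) (FopY i) (fQ_v i)).
Qed.

Lemma VQpi1 : VQpi q 1 = vac SQ.
Proof. by case: hSQ => -> _ _. Qed.

Lemma U_mono s : U (VQpi q << FMonom s >>).
Proof.
elim: s => [|[[b i] n] s IH].
  by rewrite mono_nil VQpi1; exact: U_vac.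
rewrite mono_cons; case: hSQ => _ hu hv; case: b.
- have -> : VQpi q (<< fmu (true, i, n) >> * << FMonom s >>) =
     vop SQ (uQ q i) (VQpi q << FMonom s >>) n by rewrite hu.
  exact: U_vop (U_u i) IH.
- have -> : VQpi q (<< fmu (false, i, n) >> * << FMonom s >>) =
     vop SQ (vQ q i) (VQpi q << FMonom s >>) n by rewrite hv.
  exact: U_vop (U_v i) IH.
Qed.

Lemma U_all u : U u.
Proof.
elim/VQ_ind: u => p; elim/malg_ind: p => [|c k p IH].
  have -> : VQpi q 0 = 0 by [].
  exact: U0.
rewrite VQpi_lin; apply: U_lin => //.
case: k => s; exact: U_mono.
Qed.


Lemma hom_unique (h : VQ q -> V) : nlva_hom SQ S h ->
  (forall i, h (uQ q i) = psu i) -> (forall i, h (vQ q i) = psv i) ->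
  forall p, h (VQpi q p) = Fv p.
Proof.
case=> hlin hvac hvop hu' hv'.
have hmono : forall s, h (VQpi q << FMonom s >>) = Fv << FMonom s >>.
  elim=> [|[[b i] n] s IH].
    by rewrite mono_nil VQpi1 hvac /Fv Fop1.
  rewrite mono_cons; case: hSQ => _ hu hv; case: b.
  - have -> : VQpi q (<< fmu (true, i, n) >> * << FMonom s >>) =
       vop SQ (uQ q i) (VQpi q << FMonom s >>) n by rewrite hu.
    rewrite hvop hu' IH /Fv FopM; symmetry; exact: FopX.
  - have -> : VQpi q (<< fmu (false, i, n) >> * << FMonom s >>) =
       vop SQ (vQ q i) (VQpi q << FMonom s >>) n by rewrite hv.
    rewrite hvop hv' IH /Fv FopM; symmetry; exact: FopY.
elim/malg_ind => [|c k p IH].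
  have -> : VQpi q 0 = 0 by [].
  by rewrite (f0 hlin) /Fv Fop0.
rewrite VQpi_lin hlin IH; case: k => s; rewrite hmono /Fv.
by symmetry; rewrite FopD FopZ.
Qed.

Lemma main_ex : exists! f : VQ q -> V,
    nlva_hom SQ S f /\ (forall i, f (uQ q i) = psu i) /\ (forall i, f (vQ q i) = psv i).
Proof.
exists fQ; split.
  split; [split|split].
  - exact: fQ_lin.
  - exact: fQ_vac.
  - move=> u w n; exact: U_all.
  - exact: fQ_u.
  - exact: fQ_v.
move=> h [hh [hu hv]]; apply: functional_extensionality => x.
elim/VQ_ind: x => p.
by rewrite fQ_pi (hom_unique hh hu hv).
Qed.

End Concrete.

Unset Implicit Arguments.
Unset Strict Implicit.
Theorem proposition3p8 (l : nat) (q : 'M[C]_l)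
  (hq : forall i j : 'I_l, q i j * q j i = 1)
  (SQ : nlva (VQ q)) (hSQ : VQ_structure SQ)
  (V : lmodType C) (S : nlva V) (psu psv : 'I_l -> V)
  (hXX : forall (i j : 'I_l) (m n : int) (w : V),
     vop S (psu i) (vop S (psu j) w n) m = q i j *: vop S (psu j) (vop S (psu i) w m) n)
  (hYY : forall (i j : 'I_l) (m n : int) (w : V),
     vop S (psv i) (vop S (psv j) w n) m = q i j *: vop S (psv j) (vop S (psv i) w m) n)
  (hXY : forall (i j : 'I_l) (m n : int) (w : V),
     vop S (psu i) (vop S (psv j) w n) m - q j i *: vop S (psv j) (vop S (psu i) w m) n
     = (if (i == j) && (m + n + 1 == 0) then w else 0)) :
  exists! f : VQ q -> V,
    nlva_hom SQ S f /\ (forall i, f (uQ q i) = psu i) /\ (forall i, f (vQ q i) = psv i).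
Proof. by apply: main_ex. Qed.
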